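(* Let $m_1,m_2\ge 0$ and $s_1,s_2>0$. The falsification frontier is $$FF=\big(FF_{1,2}\cup FF_{2,1}\big)\cap[0,\infty)^2,$$ where for $(j,j')\in\{(1,2),(2,1)\}$ $$FF_{j,j'}=\Big\{(\delta_e,\delta_m)\in\mathbb{R}^2:\ \delta_m=\frac{m_j-m_{j'}-\delta_e\,(s_j+s_{j'})}{2}\Big\}.$$
   Context: Let $m_j=\mathbb{E}[\hat\theta^{j}/\alpha^{j}]$ and $s_j=\mathbb{E}[1/\alpha^{j}]$ for two variable inputs $j=1,2$, where $\alpha^j>0$ is the revenue share of input $j$ and $\hat\theta^j\ge0$ its estimated output elasticity; for the purposes of the statement these are arbitrary real numbers with $m_j\ge 0$, $s_j>0$. For $(\delta_e,\delta_m)\in[0,\infty)^2$ (uniform relaxation bounds on elasticity error and on departure from cost minimization) define $\mathrm{LB}_j(\delta_e,\delta_m)=m_j-\delta_e s_j-\delta_m$, $\mathrm{UB}_j(\delta_e,\delta_m)=m_j+\delta_e s_j+\delta_m$, $L=\max\{0,\mathrm{LB}_1,\mathrm{LB}_2\}$, $U=\min\{\mathrm{UB}_1,\mathrm{UB}_2\}$, and the identified set $I(\delta_e,\delta_m)=\{x\in\mathbb{R}: L\le x\le U\}$ (possibly empty). The falsification frontier $FF$ is the set of $(\delta_e,\delta_m)\in[0,\infty)^2$ such that $I(\delta_e,\delta_m)\neq\emptyset$ and $I(\delta_e',\delta_m')=\emptyset$ for every $(\delta_e',\delta_m')\in[0,\infty)^2$ with $\delta_e'\le\delta_e$, $\delta_m'\le\delta_m$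 and $(\delta_e',\delta_m')\neq(\delta_e,\delta_m)$. *)

(* Defs.v *)
From Stdlib Require Import Reals.
Open Scope R_scope.

(* Input j has data m_j = E[theta^j/alpha^j] and s_j = E[1/alpha^j]. *)
Definition LB (mj sj de dm : R) : R := mj - de * sj - dm.
Definition UB (mj sj de dm : R) : R := mj + de * sj + dm.

Definition Lend (m1 m2 s1 s2 de dm : R) : R :=
  Rmax 0 (Rmax (LB m1 s1 de dm) (LB m2 s2 de dm)).
Definition Uend (m1 m2 s1 s2 de dm : R) : R :=
  Rmin (UB m1 s1 de dm) (UB m2 s2 de dm).

Definition Iset (m1 m2 s1 s2 de dm : R) : R -> Prop :=
  fun x => Lend m1 m2 s1 s2 de dm <= x /\ x <= Uend m1 m2 s1 s2 de dm.

Definition nonempty (A : R -> Prop) : Prop := exists x, A x.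

Definition FF (m1 m2 s1 s2 : R) : R * R -> Prop :=
  fun p =>
    0 <= fst p /\ 0 <= snd p /\
    nonempty (Iset m1 m2 s1 s2 (fst p) (snd p)) /\
    forall de' dm' : R, 0 <= de' -> 0 <= dm' ->
      de' <= fst p -> dm' <= snd p -> (de', dm') <> p ->
      ~ nonempty (Iset m1 m2 s1 s2 de' dm').

Definition FFline (mj mj' sj sj' : R) : R * R -> Prop :=
  fun p => snd p = (mj - mj' - fst p * (sj + sj')) / 2.

Definition nonneg_quadrant : R * R -> Prop :=
  fun p => 0 <= fst p /\ 0 <= snd p.

(* Main.v *)
Require Import Defs.
From Stdlib Require Import Reals Lra Psatz.
Open Scope R_scope.

Lemma ne_iff (m1 m2 s1 s2 de dm : R) :
  0 <= m1 -> 0 <= m2 -> 0 < s1 -> 0 < s2 -> 0 <= de -> 0 <= dm ->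
  nonempty (Iset m1 m2 s1 s2 de dm) <->
  (m1 - m2 <= de * (s1 + s2) + 2 * dm /\ m2 - m1 <= de * (s1 + s2) + 2 * dm).
Proof.
  intros H1 H2 H3 H4 H5 H6.
  assert (A1 : 0 <= de * s1) by (apply Rmult_le_pos; lra).
  assert (A2 : 0 <= de * s2) by (apply Rmult_le_pos; lra).
  assert (E : de * (s1 + s2) = de * s1 + de * s2) by ring.
  rewrite E.
  split.
  - intros [x [Hl Hu]]. unfold Lend, Uend, LB, UB in *.
    pose proof (Rmax_l 0 (Rmax (m1 - de * s1 - dm) (m2 - de * s2 - dm))).
    pose proof (Rmax_r 0 (Rmax (m1 - de * s1 - dm) (m2 - de * s2 - dm))).
    pose proof (Rmax_l (m1 - de * s1 - dm) (m2 - de * s2 - dm)).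
    pose proof (Rmax_r (m1 - de * s1 - dm) (m2 - de * s2 - dm)).
    pose proof (Rmin_l (m1 + de * s1 + dm) (m2 + de * s2 + dm)).
    pose proof (Rmin_r (m1 + de * s1 + dm) (m2 + de * s2 + dm)).
    lra.
  - intros [Ha Hb]. exists (Lend m1 m2 s1 s2 de dm).
    unfold Iset, Lend, Uend, LB, UB. split; [lra|].
    unfold Rmax, Rmin; repeat destruct Rle_dec; lra.
Qed.

Theorem proposition2 (m1 m2 s1 s2 : R) :
  0 <= m1 -> 0 <= m2 -> 0 < s1 -> 0 < s2 ->
  forall p : R * R,
    FF m1 m2 s1 s2 p <->
    ((FFline m1 m2 s1 s2 p \/ FFline m2 m1 s2 s1 p) /\ nonneg_quadrant p).
Proof.
  intros H1 H2 H3 H4 [de dm].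
  unfold FF, FFline, nonneg_quadrant; simpl.
  split.
  - intros [Hde [Hdm [Hne Hmin]]].
    split; [|lra].
    apply (ne_iff m1 m2 s1 s2 de dm) in Hne; auto.
    destruct Hne as [Ha Hb].
    set (g := de * (s1 + s2) + 2 * dm) in *.
    destruct (Req_dec g (m1 - m2)) as [E|E]; [left; unfold g in E; lra|].
    destruct (Req_dec g (m2 - m1)) as [E'|E']; [right; unfold g in E'; lra|].
    exfalso.
    set (c := Rmax (m1 - m2) (m2 - m1)).
    assert (Hc1 : m1 - m2 <= c) by apply Rmax_l.
    assert (Hc2 : m2 - m1 <= c) by apply Rmax_r.
    assert (Hc3 : c = m1 - m2 \/ c = m2 - m1).
    { unfold c, Rmax; destruct Rle_dec; auto. }
    assert (Hcg : c < g) by lra.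
    assert (Hg : 0 < g) by lra.
    set (l := c / g).
    assert (Hl0 : 0 <= l) by (unfold l; unfold Rdiv; apply Rmult_le_pos; [lra | left; apply Rinv_0_lt_compat; lra]).
    assert (Hl1 : l < 1).
    { unfold l. apply (Rmult_lt_reg_r g); [lra|]. field_simplify; lra. }
    assert (Hlg : l * g = c) by (unfold l; field; lra).
    apply (Hmin (l * de) (l * dm)).
    + nra.
    + nra.
    + nra.
    + nra.
    + intro Heq. injection Heq; intros Q1 Q2.
      assert (l * g = g) by (unfold g; nra). lra.
    + apply ne_iff; auto; try nra.
      assert (l * de * (s1 + s2) + 2 * (l * dm) = l * g) by (unfold g; ring).
      lra.
  - intros [Hline [Hde Hdm]].
    assert (Hs : 0 < s1 + s2) by lra.
    assert (Hg0 : 0 <= de * (s1 + s2)) by nra.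
    split; [lra|]. split; [lra|]. split.
    + apply ne_iff; auto. destruct Hline; lra.
    + intros de' dm' Hde' Hdm' Hle1 Hle2 Hneq Hne.
      apply ne_iff in Hne; auto.
      assert (Hlt : de' < de \/ dm' < dm).
      { destruct (Req_dec de' de); destruct (Req_dec dm' dm); subst; try lra.
        exfalso; apply Hneq; reflexivity. }
      assert (de' * (s1 + s2) + 2 * dm' < de * (s1 + s2) + 2 * dm).
      { destruct Hlt; nra. }
      destruct Hline; lra.
Qed.
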